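(* Consider $M$ base stations $\mathcal{M}=\{1,\dots,M\}$ and $N$ test points $\mathcal{N}=\{1,\dots,N\}$, with data demands $d_j>0$ ($j\in\mathcal{N}$), an assignment matrix $X=(x_{i,j})\in\{0,1\}^{M\times N}$ such that every base station $i$ has at least one $j$ with $x_{i,j}=1$, power gains $g_{i,j}\ge 0$ with $g_{i,j}>0$ whenever $x_{i,j}=1$, transmit power spectral densities $P_i>0$, noise power $\sigma^2>0$, and constants $K>0$, $B>0$, $\eta>0$. For $\boldsymbol{\rho}=(\rho_1,\dots,\rho_M)\in\mathbb{R}_+^M$ define $$\omega_{i,j}(\boldsymbol{\rho})=B\log_2\!\left(1+\frac{P_i g_{i,j}}{\eta\left(\sum_{l\in\mathcal{M}\setminus\{i\}}P_l g_{l,j}\rho_l+\sigma^2\right)}\right),\qquad I_i(\boldsymbol{\rho})=\sum_{j\in\mathcal{N}:\,x_{i,j}=1}\frac{d_j}{K\,\omega_{i,j}(\boldsymbol{\rho})}.$$ Then each $I_i:\mathbb{R}_+^M\to\mathbb{R}_{++}$ is concave, and hence a standard interference function; consequently $\mathcal{J}(\boldsymbol{\rho})=[I_1(\boldsymbol{\rho}),\dots,I_M(\boldsymbol{\rho})]^T$ is a standard interference mapping.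
   Context: $\mathbb{R}_+$ denotes the nonnegative reals and $\mathbb{R}_{++}$ the strictly positive reals; vector inequalities are componentwise. A function $I:\mathbb{R}_+^M\to\mathbb{R}_{++}$ is called a standard interference function if it satisfies scalability ($\alpha I(\mathbf{x})>I(\alpha\mathbf{x})$ for all $\mathbf{x}\in\mathbb{R}_+^M$, $\alpha>1$) and monotonicity ($I(\mathbf{x}_1)\ge I(\mathbf{x}_2)$ whenever $\mathbf{x}_1\ge\mathbf{x}_2$). Given standard interference functions $I_1,\dots,I_M$, the mapping $\mathbf{x}\mapsto[I_1(\mathbf{x}),\dots,I_M(\mathbf{x})]^T$ is called a standard interference mapping. *)

(* Defs.v *)
(* classical reals. Vectors in R^M are functions nat -> R,
   only the indices 0..M-1 are meaningful (stations i = 0..M-1,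
   test points j = 0..N-1). *)
From Stdlib Require Import Reals Lra Lia Arith.
Open Scope R_scope.

Fixpoint sumR (n : nat) (f : nat -> R) : R :=
  match n with
  | O => 0
  | S k => sumR k f + f k
  end.

Definition log2 (y : R) : R := ln y / ln 2.

Definition nonneg (M : nat) (x : nat -> R) : Prop :=
  forall k, (k < M)%nat -> 0 <= x k.

Definition vge (M : nat) (x1 x2 : nat -> R) : Prop :=
  forall k, (k < M)%nat -> x2 k <= x1 k.

Definition vscale (a : R) (x : nat -> R) : nat -> R := fun k => a * x k.

Definition positive_on (M : nat) (I : (nat -> R) -> R) : Prop :=
  forall x, nonneg M x -> 0 < I x.

Definition concave_on_Rplus (M : nat) (I : (nat -> R) -> R) : Prop :=
  forall x y t, nonneg M x -> nonneg M y -> 0 <= t <= 1 ->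
    t * I x + (1 - t) * I y <= I (fun k => t * x k + (1 - t) * y k).

Definition standard_interference_function (M : nat) (I : (nat -> R) -> R) : Prop :=
  positive_on M I /\
  (forall x a, nonneg M x -> 1 < a -> a * I x > I (vscale a x)) /\
  (forall x1 x2, nonneg M x1 -> nonneg M x2 -> vge M x1 x2 -> I x1 >= I x2).

Definition standard_interference_mapping (M : nat) (J : nat -> (nat -> R) -> R) : Prop :=
  forall i, (i < M)%nat -> standard_interference_function M (J i).

Definition omega (M : nat) (B eta sigma2 : R) (P : nat -> R) (g : nat -> nat -> R)
  (i j : nat) (rho : nat -> R) : R :=
  B * log2 (1 + P i * g i j /
    (eta * (sumR M (fun l => if Nat.eqb l i then 0 else P l * g l j * rho l) + sigma2))).

Definition Ifun (M N : nat) (d : nat -> R) (x : nat -> nat -> bool) (K B eta sigma2 : R)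
  (P : nat -> R) (g : nat -> nat -> R) (i : nat) (rho : nat -> R) : R :=
  sumR N (fun j => if x i j then d j / (K * omega M B eta sigma2 P g i j rho) else 0).

(* Main.v *)
From Coquelicot Require Import Coquelicot.
From Stdlib Require Import Reals Lra Lia FunctionalExtensionality.
Require Import Defs.
Open Scope R_scope.

Lemma mono_pos (f df : R -> R) :
  (forall x, 0 < x -> is_derive f x (df x)) ->
  (forall x, 0 < x -> 0 <= df x) ->
  forall x y, 0 < x -> x <= y -> f x <= f y.
Proof.
  intros Hd Hp x y Hx Hxy.
  destruct (Req_dec x y) as [<-|Hne]; [lra|].
  assert (Hlt : x < y) by lra.
  destruct (MVT_gen f x y df) as [c [Hc Heq]].
  - intros z Hz. apply Hd. rewrite Rmin_left in Hz by lra. lra.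
  - intros z Hz. rewrite Rmin_left in Hz by lra.
    apply derivable_continuous_pt. exists (df z). apply is_derive_Reals. apply Hd. lra.
  - rewrite Rmin_left, Rmax_right in Hc by lra.
    assert (0 <= df c) by (apply Hp; lra).
    assert (0 <= df c * (y - x)) by (apply Rmult_le_pos; lra). lra.
Qed.

Lemma ln_ineq (x y : R) : 0 < x -> x <= y -> 2 * (y - x) / (x + y) <= ln y - ln x.
Proof.
  intros Hx Hxy.
  set (k := fun z => ln z - ln x - 2 * (z - x) / (x + z)).
  assert (H := mono_pos k (fun z => / z - 4 * x / ((x + z) * (x + z)))).
  assert (Hk : k x <= k y).
  { apply H; [ | | lra | lra].
    - intros z Hz. unfold k. auto_derive.
      + repeat split; lra.
      + field. lra.
    - intros z Hz.
      replace (/ z - 4 * x / ((x + z) * (x + z))) with ((z - x) * (z - x) / (z * ((x + z) * (x + z)))) by (field; lra).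
      apply Rmult_le_pos. apply Rle_0_sqr. left. apply Rinv_0_lt_compat.
      apply Rmult_lt_0_compat; [lra|]. apply Rmult_lt_0_compat; lra. }
  unfold k in Hk. replace (2 * (x - x) / (x + x)) with 0 in Hk by (field; lra). lra.
Qed.

Definition Lf (a s : R) := ln (1 + a / s).
Definition hf (a s : R) := / Lf a s.
Definition Df (a s : R) := a / (s * (s + a) * (Lf a s * Lf a s)).

Lemma Lf_lb a s : 0 < a -> 0 < s -> 2 * a / (2 * s + a) <= Lf a s.
Proof.
  intros Ha Hs. unfold Lf.
  replace (1 + a / s) with ((s + a) / s) by (field; lra).
  rewrite ln_div by lra.
  replace (2 * a / (2 * s + a)) with (2 * ((s + a) - s) / (s + (s + a))) by (field; lra).
  apply ln_ineq; lra.
Qed.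

Lemma Lf_pos a s : 0 < a -> 0 < s -> 0 < Lf a s.
Proof.
  intros Ha Hs. eapply Rlt_le_trans; [|apply Lf_lb; auto].
  apply Rdiv_lt_0_compat; lra.
Qed.

Lemma Lf_deriv a s : 0 < a -> 0 < s -> is_derive (Lf a) s (- a / (s * (s + a))).
Proof.
  intros Ha Hs. unfold Lf. auto_derive.
  - split; [lra|]. split; [|auto]. apply Rplus_lt_0_compat; [lra|]. apply Rdiv_lt_0_compat; lra.
  - field. split; lra.
Qed.

Lemma Df_noninc a x y : 0 < a -> 0 < x -> x <= y -> Df a y <= Df a x.
Proof.
  intros Ha Hx Hxy.
  set (E := fun s => s * (s + a) * (Lf a s * Lf a s)).
  assert (HE : E x <= E y).
  { apply (mono_pos E (fun s => Lf a s * ((2 * s + a) * Lf a s - 2 * a))); auto.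
    - intros s Hs. unfold E.
      assert (Hp : 0 < 1 + a / s) by (apply Rplus_lt_0_compat; [lra|apply Rdiv_lt_0_compat; lra]).
      unfold Lf. auto_derive.
      + repeat split; lra.
      + unfold Rdiv. set (LL := ln (1 + a * / s)).
        replace (/ (1 + a * / s)) with (s / (s + a)) by (field; lra).
        field. lra.
    - intros s Hs. apply Rmult_le_pos. left; apply Lf_pos; auto.
      assert (H := Lf_lb a s Ha Hs).
      apply (Rmult_le_compat_l (2 * s + a)) in H; [|lra].
      replace ((2 * s + a) * (2 * a / (2 * s + a))) with (2 * a) in H by (field; lra). lra. }
  unfold Df. fold (E x). fold (E y).
  assert (0 < E x).
  { unfold E. assert (0 < Lf a x) by (apply Lf_pos; auto).
    repeat apply Rmult_lt_0_compat; lra. }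
  unfold Rdiv. apply Rmult_le_compat_l; [lra|]. apply Rinv_le_contravar; auto.
Qed.

Lemma hf_deriv a s : 0 < a -> 0 < s -> is_derive (hf a) s (Df a s).
Proof.
  intros Ha Hs. unfold hf, Df.
  assert (0 < Lf a s) by (apply Lf_pos; auto).
  replace (a / (s * (s + a) * (Lf a s * Lf a s))) with
    (- (- a / (s * (s + a))) / (Lf a s ^ 2)) by (field; repeat split; lra).
  apply (is_derive_inv (Lf a)). apply Lf_deriv; auto. lra.
Qed.

Lemma hf_cont a s : 0 < a -> 0 < s -> continuity_pt (hf a) s.
Proof.
  intros. apply derivable_continuous_pt. exists (Df a s). apply is_derive_Reals. apply hf_deriv; auto.
Qed.

Lemma hf_tangent a x y : 0 < a -> 0 < x -> 0 < y -> hf a y <= hf a x + Df a x * (y - x).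
Proof.
  intros Ha Hx Hy.
  destruct (MVT_gen (hf a) x y (Df a)) as [c [Hc Heq]].
  - intros z Hz. apply hf_deriv; auto. destruct (Rle_dec x y); [rewrite Rmin_left in Hz|rewrite Rmin_right in Hz]; lra.
  - intros z Hz. apply hf_cont; auto. destruct (Rle_dec x y); [rewrite Rmin_left in Hz|rewrite Rmin_right in Hz]; lra.
  - destruct (Rle_dec x y).
    + rewrite Rmin_left, Rmax_right in Hc by lra.
      assert (Df a c <= Df a x) by (apply Df_noninc; lra).
      assert (Df a c * (y - x) <= Df a x * (y - x)) by (apply Rmult_le_compat_r; lra). lra.
    + rewrite Rmin_right, Rmax_left in Hc by lra.
      assert (Df a x <= Df a c) by (apply Df_noninc; lra).
      assert (Df a c * (y - x) <= Df a x * (y - x)).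
      { replace (Df a c * (y - x)) with (- (Df a c * (x - y))) by ring.
        replace (Df a x * (y - x)) with (- (Df a x * (x - y))) by ring.
        apply Ropp_le_contravar. apply Rmult_le_compat_r; lra. }
      lra.
Qed.

Lemma hf_concave a s1 s2 t : 0 < a -> 0 < s1 -> 0 < s2 -> 0 <= t <= 1 ->
  t * hf a s1 + (1 - t) * hf a s2 <= hf a (t * s1 + (1 - t) * s2).
Proof.
  intros Ha H1 H2 Ht. set (z := t * s1 + (1 - t) * s2).
  assert (Hz : 0 < z).
  { unfold z. destruct (Req_dec t 0). subst. lra.
    assert (0 < t * s1) by (apply Rmult_lt_0_compat; lra).
    assert (0 <= (1 - t) * s2) by (apply Rmult_le_pos; lra). lra. }
  assert (A1 := hf_tangent a z s1 Ha Hz H1).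
  assert (A2 := hf_tangent a z s2 Ha Hz H2).
  apply (Rmult_le_compat_l t) in A1; [|lra].
  apply (Rmult_le_compat_l (1 - t)) in A2; [|lra].
  assert (E : t * (hf a z + Df a z * (s1 - z)) + (1 - t) * (hf a z + Df a z * (s2 - z)) = hf a z) by (unfold z; ring).
  lra.
Qed.

Lemma hf_mono a x y : 0 < a -> 0 < x -> x <= y -> hf a x <= hf a y.
Proof.
  intros. apply (mono_pos (hf a) (Df a)); auto.
  - intros; apply hf_deriv; auto.
  - intros s Hs. unfold Df. assert (0 < Lf a s) by (apply Lf_pos; auto).
    left. apply Rdiv_lt_0_compat; auto. repeat apply Rmult_lt_0_compat; lra.
Qed.

Lemma hf_pos a s : 0 < a -> 0 < s -> 0 < hf a s.
Proof. intros. unfold hf. apply Rinv_0_lt_compat, Lf_pos; auto. Qed.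

Lemma sumR_ext n f h : (forall k, (k < n)%nat -> f k = h k) -> sumR n f = sumR n h.
Proof. induction n; simpl; intros H; auto. rewrite IHn by (intros; apply H; lia). rewrite H by lia. auto. Qed.

Lemma sumR_lin n t u f h : sumR n (fun k => t * f k + u * h k) = t * sumR n f + u * sumR n h.
Proof. induction n; simpl. ring. rewrite IHn. ring. Qed.

Lemma sumR_le n f h : (forall k, (k < n)%nat -> f k <= h k) -> sumR n f <= sumR n h.
Proof. induction n; simpl; intros H. lra. apply Rplus_le_compat. apply IHn; intros; apply H; lia. apply H; lia. Qed.

Lemma sumR_nonneg n f : (forall k, (k < n)%nat -> 0 <= f k) -> 0 <= sumR n f.
Proof. intros H. replace 0 with (sumR n (fun _ => 0)). apply sumR_le; auto.
  clear H. induction n; simpl; auto. rewrite IHn; ring. Qed.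

Lemma sumR_pos n f j : (j < n)%nat -> 0 < f j -> (forall k, (k < n)%nat -> 0 <= f k) -> 0 < sumR n f.
Proof.
  induction n; simpl; intros Hj Hf H. lia.
  destruct (Nat.eq_dec j n).
  - subst. assert (0 <= sumR n f) by (apply sumR_nonneg; intros; apply H; lia). lra.
  - assert (0 < sumR n f) by (apply IHn; [lia | auto | intros; apply H; lia]).
    assert (0 <= f n) by (apply H; lia). lra.
Qed.

Section Main.
Variables (M N : nat) (d : nat -> R) (x : nat -> nat -> bool)
  (g : nat -> nat -> R) (P : nat -> R) (sigma2 K B eta : R)
  (Hd : forall j, (j < N)%nat -> 0 < d j)
  (Hx : forall i, (i < M)%nat -> exists j, (j < N)%nat /\ x i j = true)
  (Hg : forall i j, (i < M)%nat -> (j < N)%nat -> 0 <= g i j)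
  (Hgx : forall i j, (i < M)%nat -> (j < N)%nat -> x i j = true -> 0 < g i j)
  (HP : forall i, (i < M)%nat -> 0 < P i)
  (Hs : 0 < sigma2) (HK : 0 < K) (HB : 0 < B) (Heta : 0 < eta).

Definition Sf i j (rho : nat -> R) :=
  eta * (sumR M (fun l => if Nat.eqb l i then 0 else P l * g l j * rho l) + sigma2).

Lemma Sf_pos i j rho : (j < N)%nat -> nonneg M rho -> 0 < Sf i j rho.
Proof.
  intros Hj Hr. unfold Sf. apply Rmult_lt_0_compat; auto.
  assert (0 <= sumR M (fun l => if Nat.eqb l i then 0 else P l * g l j * rho l)).
  { apply sumR_nonneg. intros k Hk. destruct (Nat.eqb k i). lra.
    apply Rmult_le_pos; [apply Rmult_le_pos|]; auto. left; auto. }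
  lra.
Qed.

Lemma Sf_mono i j r1 r2 : (j < N)%nat -> vge M r1 r2 -> Sf i j r2 <= Sf i j r1.
Proof.
  intros Hj Hr. unfold Sf. apply Rmult_le_compat_l; [lra|]. apply Rplus_le_compat_r.
  apply sumR_le. intros k Hk. destruct (Nat.eqb k i). lra.
  apply Rmult_le_compat_l. apply Rmult_le_pos; auto. left; auto. apply Hr; auto.
Qed.

Lemma Sf_lin i j t r1 r2 :
  Sf i j (fun k => t * r1 k + (1 - t) * r2 k) = t * Sf i j r1 + (1 - t) * Sf i j r2.
Proof.
  unfold Sf.
  rewrite (sumR_ext M _ (fun l => t * (if Nat.eqb l i then 0 else P l * g l j * r1 l) +
     (1 - t) * (if Nat.eqb l i then 0 else P l * g l j * r2 l))).
  - rewrite sumR_lin. ring.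
  - intros k _. destruct (Nat.eqb k i); ring.
Qed.

Definition cf j := d j * ln 2 / (K * B).

Lemma term_eq i j rho : (i < M)%nat -> (j < N)%nat -> x i j = true -> nonneg M rho ->
  d j / (K * omega M B eta sigma2 P g i j rho) = cf j * hf (P i * g i j) (Sf i j rho).
Proof.
  intros Hi Hj Hxij Hr.
  assert (Ha : 0 < P i * g i j) by (apply Rmult_lt_0_compat; auto).
  assert (HS := Sf_pos i j rho Hj Hr).
  assert (HL := Lf_pos _ _ Ha HS).
  assert (H2 := ln_lt_2).
  unfold omega, log2, cf, hf. fold (Sf i j rho). unfold Lf in *.
  field. repeat split; lra.
Qed.

Definition term i j rho := if x i j then cf j * hf (P i * g i j) (Sf i j rho) else 0.

Lemma Ifun_eq i rho : (i < M)%nat -> nonneg M rho ->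
  Ifun M N d x K B eta sigma2 P g i rho = sumR N (fun j => term i j rho).
Proof.
  intros Hi Hr. unfold Ifun. apply sumR_ext. intros j Hj. unfold term.
  destruct (x i j) eqn:E; auto. apply term_eq; auto.
Qed.

Lemma cf_pos j : (j < N)%nat -> 0 < cf j.
Proof.
  intros Hj. unfold cf. assert (H2 := ln_lt_2). assert (0 < d j) by auto.
  apply Rdiv_lt_0_compat. apply Rmult_lt_0_compat; lra. apply Rmult_lt_0_compat; auto.
Qed.

Lemma term_nonneg i j rho : (i < M)%nat -> (j < N)%nat -> nonneg M rho -> 0 <= term i j rho.
Proof.
  intros Hi Hj Hr. unfold term. destruct (x i j) eqn:E; [|lra].
  left. apply Rmult_lt_0_compat. apply cf_pos; auto. apply hf_pos.
  apply Rmult_lt_0_compat; auto. apply Sf_pos; auto.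
Qed.

Lemma I_pos i : (i < M)%nat -> positive_on M (Ifun M N d x K B eta sigma2 P g i).
Proof.
  intros Hi rho Hr. rewrite Ifun_eq by auto.
  destruct (Hx i Hi) as [j [Hj E]].
  apply (sumR_pos _ _ j Hj).
  - unfold term. rewrite E. apply Rmult_lt_0_compat. apply cf_pos; auto. apply hf_pos.
    apply Rmult_lt_0_compat; auto. apply Sf_pos; auto.
  - intros; apply term_nonneg; auto.
Qed.

Lemma nonneg_comb t r1 r2 : nonneg M r1 -> nonneg M r2 -> 0 <= t <= 1 ->
  nonneg M (fun k => t * r1 k + (1 - t) * r2 k).
Proof.
  intros H1 H2 Ht k Hk. assert (0 <= r1 k) by auto. assert (0 <= r2 k) by auto.
  apply Rplus_le_le_0_compat; apply Rmult_le_pos; lra.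
Qed.

Lemma I_concave i : (i < M)%nat -> concave_on_Rplus M (Ifun M N d x K B eta sigma2 P g i).
Proof.
  intros Hi r1 r2 t H1 H2 Ht.
  rewrite !Ifun_eq by (auto; apply nonneg_comb; auto).
  rewrite <- sumR_lin. apply sumR_le. intros j Hj. unfold term.
  destruct (x i j) eqn:E; [|lra].
  rewrite Sf_lin.
  assert (Ha : 0 < P i * g i j) by (apply Rmult_lt_0_compat; auto).
  assert (C := hf_concave _ _ _ t Ha (Sf_pos i j r1 Hj H1) (Sf_pos i j r2 Hj H2) Ht).
  assert (0 < cf j) by (apply cf_pos; auto).
  apply (Rmult_le_compat_l (cf j)) in C; lra.
Qed.

Lemma I_mono i : (i < M)%nat -> forall x1 x2, nonneg M x1 -> nonneg M x2 -> vge M x1 x2 ->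
  Ifun M N d x K B eta sigma2 P g i x1 >= Ifun M N d x K B eta sigma2 P g i x2.
Proof.
  intros Hi x1 x2 H1 H2 H12. rewrite !Ifun_eq by auto. apply Rle_ge.
  apply sumR_le. intros j Hj. unfold term. destruct (x i j) eqn:E; [|lra].
  apply Rmult_le_compat_l. left; apply cf_pos; auto.
  apply hf_mono. apply Rmult_lt_0_compat; auto. apply Sf_pos; auto. apply Sf_mono; auto.
Qed.

Lemma I_scal i : (i < M)%nat -> forall r a, nonneg M r -> 1 < a ->
  a * Ifun M N d x K B eta sigma2 P g i r > Ifun M N d x K B eta sigma2 P g i (vscale a r).
Proof.
  intros Hi r a Hr Ha.
  assert (Hn1 : nonneg M (vscale a r)).
  { intros k Hk. unfold vscale. apply Rmult_le_pos; [lra| auto]. }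
  assert (Hn0 : nonneg M (fun _ => 0)) by (intros k _; lra).
  assert (Ht : 0 <= / a <= 1).
  { split. left; apply Rinv_0_lt_compat; lra.
    rewrite <- Rinv_1. apply Rinv_le_contravar; lra. }
  assert (C := I_concave i Hi _ _ _ Hn1 Hn0 Ht).
  assert (Er : (fun k : nat => / a * vscale a r k + (1 - / a) * (fun _ : nat => 0) k) = r).
  { apply functional_extensionality. intros k. unfold vscale. field. lra. }
  cbv beta in C. rewrite Er in C.
  assert (P0 := I_pos i Hi _ Hn0).
  assert (0 < 1 - / a).
  { assert (/ a < 1). rewrite <- Rinv_1. apply Rinv_lt_contravar; lra. lra. }
  assert (0 < (1 - / a) * Ifun M N d x K B eta sigma2 P g i (fun _ => 0)) by (apply Rmult_lt_0_compat; auto).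
  assert (/ a * Ifun M N d x K B eta sigma2 P g i (vscale a r) < Ifun M N d x K B eta sigma2 P g i r) by lra.
  apply (Rmult_lt_compat_l a) in H1; [|lra].
  rewrite <- Rmult_assoc, Rinv_r, Rmult_1_l in H1 by lra. lra.
Qed.

End Main.

Theorem mainTheorem2 (M N : nat) (d : nat -> R) (x : nat -> nat -> bool)
  (g : nat -> nat -> R) (P : nat -> R) (sigma2 K B eta : R)
  (Hd : forall j, (j < N)%nat -> 0 < d j)
  (Hx : forall i, (i < M)%nat -> exists j, (j < N)%nat /\ x i j = true)
  (Hg : forall i j, (i < M)%nat -> (j < N)%nat -> 0 <= g i j)
  (Hgx : forall i j, (i < M)%nat -> (j < N)%nat -> x i j = true -> 0 < g i j)
  (HP : forall i, (i < M)%nat -> 0 < P i)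
  (Hs : 0 < sigma2) (HK : 0 < K) (HB : 0 < B) (Heta : 0 < eta) :
  (forall i, (i < M)%nat ->
     positive_on M (Ifun M N d x K B eta sigma2 P g i) /\
     concave_on_Rplus M (Ifun M N d x K B eta sigma2 P g i) /\
     standard_interference_function M (Ifun M N d x K B eta sigma2 P g i)) /\
  standard_interference_mapping M (Ifun M N d x K B eta sigma2 P g).
Proof.
  assert (H : forall i, (i < M)%nat ->
     positive_on M (Ifun M N d x K B eta sigma2 P g i) /\
     concave_on_Rplus M (Ifun M N d x K B eta sigma2 P g i) /\
     standard_interference_function M (Ifun M N d x K B eta sigma2 P g i)).
  { intros i Hi. split; [|split].
    - apply I_pos; auto.
    - apply I_concave; auto.
    - split; [|split].
      + apply I_pos; auto.
      + intros; eapply I_scal; eauto.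
      + intros; eapply I_mono; eauto. }
  split; auto. intros i Hi. apply H; auto.
Qed.
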